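(* Let $\mathsf G=(\mathsf V,\mathsf E)$ be a finite connected graph without loops or multiple edges, with discrete Laplacian $\mathcal L=\mathcal I\mathcal I^T$ acting on $\ell^2(\mathsf V)$. The following assertions are equivalent: (i) $\mathsf G$ is complete; (ii) the semigroup $(e^{-t\mathcal L^2})_{t\ge 0}$ is positive, i.e. $e^{-t\mathcal L^2}f$ has nonnegative entries for all $t\ge0$ and all $f$ with nonnegative entries; (iii) the semigroup $(e^{-t\mathcal L^2})_{t\ge0}$ is $\ell^\infty$-contractive, i.e. $\|e^{-t\mathcal L^2}f\|_\infty\le\|f\|_\infty$ for all $t\ge0$ and all $f\in\mathbb C^V$.
   Context: $V=|\mathsf V|$ and $\ell^2(\mathsf V)=\mathbb C^V$. After fixing an arbitrary orientation of the edges, the incidence matrix $\mathcal I\in\mathbb R^{V\times E}$ has entries $\iota_{\mathsf v\mathsf e}=-1$ if $\mathsf v$ is the initial endpoint of $\mathsf e$, $+1$ if $\mathsf v$ is the terminal endpoint of $\mathsf e$, and $0$ otherwise; $\mathcal L=\mathcal I\mathcal I^T$ is the discrete Laplacian (independent of the orientation). A graph is complete if every pair of distinct vertices is joined by exactly one edge. *)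

(* Defs.v *)
From HB Require Import structures.
From mathcomp Require Import all_boot all_order all_algebra.
From mathcomp Require Import all_classical all_reals all_analysis.
From mathcomp Require Import complex.
Set Implicit Arguments. Unset Strict Implicit. Unset Printing Implicit Defensive.
Import Order.TTheory GRing.Theory Num.Theory.
Local Open Scope classical_set_scope.
Local Open Scope ring_scope.

Definition simple_graph n (e : rel 'I_n) : Prop := symmetric e /\ irreflexive e.
Definition connected_graph n (e : rel 'I_n) : Prop := forall x y, connect e x y.
Definition complete_graph n (e : rel 'I_n) : Prop := forall x y, x != y -> e x y.

(* Edge list with a fixed orientation: the edge {x,y} with x < y is
   oriented from x (initial) to y (terminal). *)
Definition edges n (e : rel 'I_n) : seq ('I_n * 'I_n) :=
  [seq p <- enum [set: 'I_n * 'I_n] | e p.1 p.2 && (p.1 < p.2)%N].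

Definition incidence (R : pzRingType) n (e : rel 'I_n) : 'M[R]_(n, size (edges e)) :=
  \matrix_(v, k) (let p := nth (v, v) (edges e) k in
                  if v == p.1 then -1 else if v == p.2 then 1 else 0).

Definition laplacian (R : pzRingType) n (e : rel 'I_n) : 'M[R]_n :=
  incidence R e *m (incidence R e)^T.

Definition expmx (R : realType) n (M : 'M[R]_n) : 'M[R]_n :=
  \matrix_(i, j) lim ((fun N : nat => \sum_(k < N) (M ^+ k) i j / (k`!)%:R) @ \oo).

Definition heat_bilap (R : realType) n (e : rel 'I_n) (t : R) : 'M[R]_n :=
  expmx ((- t) *: (laplacian R e *m laplacian R e)).

Definition supnorm (R : realType) n (f : 'cV[R[i]]_n) : R :=
  \big[Num.max/0]_(j < n) ComplexField.Normc.normc (f j 0).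

Definition positive_semigroup (R : realType) n (P : R -> 'M[R]_n) : Prop :=
  forall t : R, 0 <= t -> forall f : 'cV[R]_n,
    (forall j, 0 <= f j 0) -> forall i, 0 <= (P t *m f) i 0.

Definition linfty_contractive (R : realType) n (P : R -> 'M[R]_n) : Prop :=
  forall t : R, 0 <= t -> forall f : 'cV[R[i]]_n,
    supnorm (map_mx (real_complex R) (P t) *m f) <= supnorm f.

Arguments incidence R {n} e.
Arguments laplacian R {n} e.
Arguments heat_bilap R {n} e t.

(* Main.v *)
Require Import Defs.
From HB Require Import structures.
From mathcomp Require Import all_boot all_order all_algebra.
From mathcomp Require Import all_classical all_reals all_analysis.
From mathcomp Require Import complex.
From mathcomp Require Import ring lra.
Import Order.TTheory GRing.Theory Num.Theory.
Import numFieldNormedType.Exports.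
Local Open Scope classical_set_scope.
Local Open Scope ring_scope.
Set Implicit Arguments. Unset Strict Implicit. Unset Printing Implicit Defensive.

Section Lap.
Variables (R : realType) (n : nat) (e : rel 'I_n).

Definition gv (v : 'I_n) (p : 'I_n * 'I_n) : R :=
  if v == p.1 then -1 else if v == p.2 then 1 else 0.

Lemma mem_edges p : (p \in edges e) = e p.1 p.2 && (p.1 < p.2)%N.
Proof. by rewrite mem_filter mem_enum in_setT andbT. Qed.

Lemma uniq_edges : uniq (edges e).
Proof. by rewrite filter_uniq // enum_uniq. Qed.

Lemma lapE i j : laplacian R e i j = \sum_(p <- edges e) gv i p * gv j p.
Proof.
rewrite /laplacian !mxE (big_nth (i, i)) big_mkord.
apply: eq_bigr => k _; rewrite !mxE.
by rewrite (set_nth_default (i, i) (j, j)) ?ltn_ord.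
Qed.

Lemma sum_gv (p : 'I_n * 'I_n) : (p.1 < p.2)%N -> \sum_j gv j p = 0.
Proof.
move=> lt12.
have ne : p.1 != p.2 by rewrite neq_ltn lt12.
rewrite (bigD1 p.1) //= (bigD1 p.2) //= 1?eq_sym //.
rewrite big1 => [|j /andP[j2 j1]]; last by rewrite /gv (negbTE j1) (negbTE j2).
by rewrite /gv eqxx eq_sym (negbTE ne) eqxx addr0 addNr.
Qed.

Lemma lap_rowsum i : \sum_j laplacian R e i j = 0.
Proof.
under eq_bigr do rewrite lapE.
rewrite exchange_big /= big_seq big1 // => p; rewrite mem_edges => /andP[_ lt].
by rewrite -mulr_sumr sum_gv // mulr0.
Qed.

Lemma lap_sym i j : laplacian R e i j = laplacian R e j i.
Proof. by rewrite !lapE; apply: eq_bigr => p _; rewrite mulrC. Qed.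

Lemma lap_offdiag_lt (i j : 'I_n) : simple_graph e -> (i < j)%N ->
  laplacian R e i j = - (e i j)%:R.
Proof.
move=> [sym irr] lt; rewrite lapE.
have ne : i != j by rewrite neq_ltn lt.
have H p : p \in edges e -> p != (i, j) -> gv i p * gv j p = 0.
  rewrite mem_edges; case: p => a b /= /andP[_ ab] pne.
  rewrite /gv /=.
  have [ia|ia] := eqVneq i a.
    have [ja|ja] := eqVneq j a; first by move: ne; rewrite ia ja eqxx.
    have [jb|jb] := eqVneq j b; last by rewrite !mulr0.
    by rewrite ia jb eqxx in pne.
  have [ib|ib] := eqVneq i b; last by rewrite !mul0r.
  have [ja|ja] := eqVneq j a.
    by move: ab; rewrite -ib -ja ltnNge (ltnW lt).
  have [jb|jb] := eqVneq j b; last by rewrite !mulr0.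
  by move: ne; rewrite ib jb eqxx.
case E : (e i j).
  have mem : (i, j) \in edges e by rewrite mem_edges /= E lt.
  rewrite (bigD1_seq (i, j)) ?uniq_edges //= big_seq_cond big1.
    by rewrite /gv /= eqxx eq_sym (negbTE ne) eqxx addr0 mulN1r.
  by move=> p /andP[pm pn]; apply: H.
rewrite big_seq big1 ?oppr0 // => p pm; apply: H => //.
apply: contraTneq pm => ->; by rewrite mem_edges /= E.
Qed.

Lemma lap_offdiag (i j : 'I_n) : simple_graph e -> i != j ->
  laplacian R e i j = - (e i j)%:R.
Proof.
move=> sg ne; have [lt|gt] := ltnP i j; first exact: lap_offdiag_lt.
have lt : (j < i)%N by rewrite ltn_neqAle gt andbT eq_sym; apply: contra ne => /eqP/val_inj ->.
by rewrite lap_sym lap_offdiag_lt // (proj1 sg).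
Qed.

End Lap.
Section Expo.
Variables (R : realType) (n : nat).
Implicit Types A : 'M[R]_n.

Lemma one_mxE (i j : 'I_n) : (1 : 'M[R]_n) i j = (i == j)%:R.
Proof. by rewrite mxE. Qed.

Lemma pow_bound A (c : R) : 0 <= c -> (forall i, \sum_j `|A i j| <= c) ->
  forall k i j, `|(A ^+ k) i j| <= c ^+ k.
Proof.
move=> c0 rb; elim=> [|k IH] i j.
  by rewrite expr0 one_mxE; case: (i == j); rewrite ?normr1 ?normr0.
rewrite exprS -mulmxE mxE; apply: le_trans (ler_norm_sum _ _ _) _.
apply: le_trans (_ : \sum_l `|A i l| * c ^+ k <= _).
  apply: ler_sum => l _; rewrite normrM; apply: ler_wpM2l => //.
rewrite -mulr_suml exprS mulrC [c * _]mulrC; apply: ler_wpM2l => //; exact: exprn_ge0.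
Qed.

Definition rowabs A := \sum_i \sum_j `|A i j|.

Lemma rowabs_ge A i : \sum_j `|A i j| <= rowabs A.
Proof.
rewrite /rowabs [X in _ <= X](bigD1 i) //= lerDl sumr_ge0 // => k _.
by rewrite sumr_ge0.
Qed.

Lemma cvg_entry A i j :
  cvgn (fun N : nat => \sum_(k < N) (A ^+ k) i j / (k`!)%:R).
Proof.
set u := fun k : nat => (A ^+ k) i j / (k`!)%:R.
have -> : (fun N : nat => \sum_(k < N) (A ^+ k) i j / (k`!)%:R) = series u.
  by rewrite seriesEord.
apply: normed_cvg.
have c0 : 0 <= rowabs A by rewrite /rowabs sumr_ge0 // => k _; rewrite sumr_ge0.
apply: (@series_le_cvg _ _ (exp_coeff (rowabs A))).
- by move=> k; rewrite /= normr_ge0.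
- by move=> k; rewrite exp_coeff_ge0.
- move=> k; rewrite /u /exp_coeff /= normrM normfV [`|_%:R|]ger0_norm //.
  by rewrite ler_wpM2r ?invr_ge0 // pow_bound // => i'; apply: rowabs_ge.
- exact: is_cvg_series_exp_coeff.
Qed.


Lemma cvg_sumI (I : eqType) (r : seq I) (u : I -> nat -> R) (l : I -> R) :
  (forall j, u j @ \oo --> l j) ->
  (fun N : nat => \sum_(j <- r) u j N) @ \oo --> \sum_(j <- r) l j.
Proof.
move=> H; elim: r => [|a r IH].
  under eq_fun do rewrite big_nil. rewrite big_nil; exact: cvg_cst.
under eq_fun do rewrite big_cons. rewrite big_cons.
exact: cvgD.
Qed.

Lemma sum_pow_row A : (forall i, \sum_j A i j = 0) ->
  forall k i, \sum_j (A ^+ k) i j = (k == 0)%:R.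
Proof.
move=> rs [|k] i.
  rewrite expr0 (bigD1 i) //= big1 => [|j ji]; first by rewrite one_mxE eqxx addr0.
  by rewrite one_mxE eq_sym (negbTE ji).
rewrite exprSr -mulmxE.
under eq_bigr do rewrite mxE.
rewrite exchange_big /= big1 // => l _.
by rewrite -mulr_sumr rs mulr0.
Qed.

Lemma expmx_rowsum A : (forall i, \sum_j A i j = 0) ->
  forall i, \sum_j expmx A i j = 1.
Proof.
move=> rs i.
have H : (fun N : nat => \sum_j \sum_(k < N) (A ^+ k) i j / (k`!)%:R) @ \oo
    --> \sum_j expmx A i j.
  apply: cvg_sumI => j; rewrite mxE; exact: cvg_entry.
rewrite -(cvg_lim (@norm_hausdorff _ _) H); apply: (lim_near_cst (@norm_hausdorff _ _)).
near=> N.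
have [m ->] : exists m, N = m.+1.
  by exists N.-1; rewrite prednK //; near: N; exists 1%N.
rewrite exchange_big /= big_ord_recl /=.
rewrite -mulr_suml sum_pow_row //; under eq_bigr do rewrite -mulr_suml sum_pow_row //.
rewrite /= divr1 big1 ?addr0 // => k _.
by rewrite /bump /= mul0r.
Unshelve. all: by end_near.
Qed.

Lemma geom_bound (c : R) m : 0 <= c -> c <= 1/2 ->
  \sum_(k < m) c ^+ k <= 2 - 2 * c ^+ m.
Proof.
move=> c0 c12; elim: m => [|m IH]; first by rewrite big_ord0 expr0 mulr1 subrr.
rewrite big_ord_recr /= exprSr.
have x0 : 0 <= c ^+ m by rewrite exprn_ge0.
set x := c ^+ m in IH x0 *.
nra.
Qed.

Lemma expmx_offdiag_bound A (c : R) i j : i != j -> 0 <= c -> c <= 1/2 ->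
  (forall i, \sum_j `|A i j| <= c) -> expmx A i j <= A i j + 2 * c ^+ 2.
Proof.
move=> ij c0 c12 rb; rewrite mxE; apply: limr_le; first exact: cvg_entry.
near=> N.
have [m ->] : exists m, N = m.+2.
  exists (N - 2)%N; rewrite -addn2 subnK //; near: N; exists 2%N => //.
rewrite !big_ord_recl /= expr0 one_mxE (negbTE ij) mul0r add0r.
rewrite /bump /= expr1 divr1 lerD2l.
apply: le_trans (_ : \sum_(k < m) c ^+ 2 * c ^+ k <= _).
  apply: le_trans (ler_norm _) _.
  apply: le_trans (ler_norm_sum _ _ _) _.
  apply: ler_sum => k _.
  rewrite !add1n normrM normfV [`|_%:R|]ger0_norm // -exprD.
  rewrite -[X in _ <= X]divr1; apply: ler_pM; rewrite ?invr_ge0 //.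
    by rewrite add2n; apply: pow_bound.
  by rewrite invr1 invf_le1 ?ltr0n ?fact_gt0 // ler1n fact_gt0.
rewrite -mulr_sumr mulrC ler_wpM2r ?exprn_ge0 //.
apply: le_trans (geom_bound m c0 c12) _.
by rewrite lerBlDr lerDl mulr_ge0 ?exprn_ge0.
Unshelve. all: by end_near.
Qed.

End Expo.
Section Norms.
Variables (R : realType) (n : nat).
Import ComplexField.Normc.

Lemma normc_real (x : R) : normc (real_complex R x) = `|x|.
Proof. by rewrite /normc /= expr0n /= addr0 sqrtr_sqr. Qed.

Lemma normc_sum (I : Type) (r : seq I) (F : I -> R[i]) :
  normc (\sum_(j <- r) F j) <= \sum_(j <- r) normc (F j).
Proof.
elim: r => [|a r IH]; first by rewrite !big_nil normc0.
rewrite !big_cons; apply: le_trans (le_normcD _ _) _.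
by rewrite lerD2l.
Qed.

Lemma normc_le_sup (f : 'cV[R[i]]_n) j : normc (f j 0) <= supnorm f.
Proof. exact: (le_bigmax _ (fun j => normc (f j 0))). Qed.

Lemma supnorm_le (f : 'cV[R[i]]_n) (x : R) : 0 <= x ->
  (forall j, normc (f j 0) <= x) -> supnorm f <= x.
Proof. by move=> x0 H; apply: bigmax_le. Qed.

Lemma pos_contr (H : 'M[R]_n) : (forall i j, 0 <= H i j) ->
  (forall i, \sum_j H i j = 1) ->
  (forall f : 'cV[R]_n, (forall j, 0 <= f j 0) -> forall i, 0 <= (H *m f) i 0) /\
  (forall f : 'cV[R[i]]_n, supnorm (map_mx (real_complex R) H *m f) <= supnorm f).
Proof.
move=> H0 H1; split.
  by move=> f f0 i; rewrite mxE sumr_ge0 // => j _; rewrite mulr_ge0.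
move=> f; have S0 : 0 <= supnorm f.
  rewrite /supnorm; apply: (big_ind (fun x => 0 <= x)) => [//|x y x0 y0|j _].
    by rewrite le_max x0.
  by rewrite /normc; case: (f j 0) => a b; exact: sqrtr_ge0.
apply: supnorm_le => // i; rewrite mxE.
apply: le_trans (normc_sum _ _) _.
apply: le_trans (_ : \sum_j H i j * supnorm f <= _).
  apply: ler_sum => j _; rewrite mxE normcM normc_real ger0_norm //.
  by apply: ler_wpM2l => //; apply: normc_le_sup.
by rewrite -mulr_suml H1 mul1r.
Qed.
End Norms.
Section Graph.
Variables (R : realType) (n : nat) (e : rel 'I_n).
Hypothesis sg : simple_graph e.
Local Notation L := (laplacian R e).
Local Notation nn := (n%:R : R).

Lemma LL_rowsum i : \sum_j (L *m L) i j = 0.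
Proof.
under eq_bigr do rewrite mxE.
rewrite exchange_big /= big1 // => k _.
by rewrite -mulr_sumr lap_rowsum mulr0.
Qed.

Lemma heat_rowsum t i : \sum_j heat_bilap R e t i j = 1.
Proof.
apply: expmx_rowsum => k.
under eq_bigr do rewrite mxE.
by rewrite -mulr_sumr LL_rowsum mulr0.
Qed.

Section Complete.
Hypothesis comp : complete_graph e.

Lemma lap_complete i j : L i j = (i == j)%:R * nn - 1.
Proof.
have [<-|ij] := eqVneq i j; last first.
  by rewrite lap_offdiag // comp // mul0r add0r.
have := lap_rowsum R e i; rewrite (bigD1 i) //=.
rewrite (eq_bigr (fun _ => -1)) => [|k ki]; last by rewrite lap_offdiag 1?eq_sym // comp 1?eq_sym.
rewrite sumr_const cardC1 card_ord mul1r => /eqP.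
rewrite addr_eq0 => /eqP ->.
have n0 : (0 < n)%N by case: i => [k kn]; apply: leq_ltn_trans kn.
by rewrite -mulNrn opprK -{2}(prednK n0) mulrSr addrK.
Qed.

Lemma LLc : L *m L = nn *: L.
Proof.
have Lmx : L = nn%:M - const_mx 1.
  by apply/matrixP => i j; rewrite lap_complete !mxE mulr_natl.
  have JJ : (const_mx 1 : 'M[R]_n) *m (const_mx 1 : 'M[R]_n) = nn *: (const_mx 1 : 'M[R]_n).
  apply/matrixP => i j; rewrite !mxE (eq_bigr (fun _ => 1)) => [|k _]; last by rewrite !mxE mulr1.
  by rewrite sumr_const card_ord mulr1.
rewrite [in LHS]Lmx mulmxBl mul_scalar_mx mulmxBr mul_mx_scalar JJ subrr subr0.
by rewrite -Lmx.
Qed.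

Lemma heat_complete t i j :
  heat_bilap R e t i j = (1 - expR (- t * nn ^+ 2)) / nn + expR (- t * nn ^+ 2) * (i == j)%:R.
Proof.
have n0 : (0 < n)%N by case: i => [k kn]; apply: leq_ltn_trans kn.
have nn0 : nn != 0 by rewrite pnatr_eq0 -lt0n.
set a := - t * nn ^+ 2.
set P := nn^-1 *: L.
have PP : P * P = P.
  by rewrite /P -mulmxE -scalemxAl -scalemxAr LLc !scalerA -mulrA mulVf // mulr1.
have HM : (-t) *: (L *m L) = a *: P.
  rewrite LLc /P !scalerA (_ : -t * nn = a * nn^-1) //.
  rewrite /a; field; exact: nn0.
have Pk k : (a *: P) ^+ k.+1 = a ^+ k.+1 *: P.
  elim: k => [|k IH]; first by rewrite !expr1.
  by rewrite exprS IH -mulmxE -scalemxAl -scalemxAr scalerA mulmxE PP -exprS.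
rewrite /heat_bilap HM mxE.
apply: (cvg_lim (@norm_hausdorff _ _)).
rewrite -cvg_shiftS.
have -> : [sequence \sum_(k < N.+1) ((a *: P) ^+ k) i j / (k`!)%:R]_N =
    (fun N => ((i == j)%:R - P i j) + series (exp_coeff a) N.+1 * P i j).
  apply: funext => N /=.
  rewrite seriesEord /= !big_ord_recl /= expr0 mxE /exp_coeff /= expr0 divr1 mul1r.
  under eq_bigr do rewrite Pk mxE.
  rewrite mulrDl mulr_suml.
  under [X in _ = _ + (_ + X)]eq_bigr do rewrite mulrAC.
  rewrite fact0 invr1 mul1r addrA subrK; congr (_ + _); apply: eq_bigr => k _; reflexivity.
have -> : (1 - expR a) / nn + expR a * (i == j)%:R =
    ((i == j)%:R - P i j) + expR a * P i j.
  rewrite /P mxE lap_complete; field; exact: nn0.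
apply: cvgD; first exact: cvg_cst.
apply: cvgMr_tmp.
have Hs : series (exp_coeff a) @ \oo --> expR a := is_cvg_series_exp_coeff a.
by rewrite -cvg_shiftS in Hs.
Qed.

End Complete.
Lemma dist2 : connected_graph e -> ~ complete_graph e ->
  exists a b c, [/\ e a b, e b c, a != c & ~~ e a c].
Proof.
move=> con nc; case: (pselect (exists a b c, [/\ e a b, e b c, a != c & ~~ e a c])) => // H.
exfalso; apply: nc => x y xy.
have T a b c : e a b -> e b c -> a != c -> e a c.
  move=> ab bc ac; apply/negPn/negP => nac; apply: H; by exists a, b, c.
have claim p : path e x p -> last x p = x \/ e x (last x p).
  elim/last_ind: p => [|p z IH] /=; first by left.
  rewrite rcons_path last_rcons => /andP[/IH [->|xw] wz]; first by right.
  have [->|xz] := eqVneq x z; [by left | right; exact: T xw wz xz].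
have [p pth yE] := connectP (con x y).
by case: (claim p pth) => [E|//]; [rewrite -yE in E; rewrite E eqxx in xy | rewrite yE].
Qed.

Lemma LL_pos a b c : e a b -> e b c -> a != c -> ~~ e a c -> 1 <= (L *m L) a c.
Proof.
move=> ab bc ac nac.
have irr := proj2 sg.
have ab' : a != b by apply: contraTneq ab => ->; rewrite irr.
have bc' : b != c by apply: contraTneq bc => ->; rewrite irr.
have Lac : L a c = 0 by rewrite lap_offdiag // (negbTE nac) oppr0.
rewrite mxE (bigD1 b) //= lap_offdiag // lap_offdiag // ab bc mulrNN mulr1.
rewrite lerDl sumr_ge0 // => z zb.
have [->|za] := eqVneq z a; first by rewrite Lac mulr0.
have [->|zc] := eqVneq z c; first by rewrite Lac mul0r.
rewrite lap_offdiag 1?eq_sym // lap_offdiag // mulrNN.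
Qed.

Lemma heat_neg : connected_graph e -> ~ complete_graph e ->
  exists t, 0 <= t /\ exists a c, heat_bilap R e t a c < 0.
Proof.
move=> con nc; have [a [b [c [ab bc ac nac]]]] := dist2 con nc.
have m1 := LL_pos ab bc ac nac.
set B := L *m L in m1 *.
set K := rowabs B + 1.
have K1 : 1 <= K.
  rewrite /K lerDr /rowabs sumr_ge0 // => i _; rewrite sumr_ge0 // => j _.
have K0 : 0 < K by apply: lt_le_trans K1.
set t := (4 * K ^+ 2)^-1.
have t0 : 0 < t by rewrite invr_gt0 mulr_gt0 // exprn_gt0.
have tK : t * K ^+ 2 = 1 / 4 by rewrite /t; field; rewrite lt0r_neq0.
exists t; split; first exact: ltW.
exists a, c.
have rb : forall i, \sum_j `|((- t) *: B) i j| <= t * K.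
  move=> i; under eq_bigr do rewrite mxE normrM normrN (gtr0_norm t0).
  rewrite -mulr_sumr ler_pM2l //; apply: le_trans (rowabs_ge B i) _.
  by rewrite /K lerDl.
have tKK : t * K <= t * K ^+ 2.
  by rewrite expr2 mulrA ler_peMr // mulr_ge0 // ltW.
have c12 : t * K <= 1 / 2 by lra.
have := expmx_offdiag_bound ac (ltW (mulr_gt0 t0 K0)) c12 rb.
rewrite /heat_bilap mxE => /le_lt_trans; apply.
rewrite mxE exprMn expr2 -mulrA tK. nra.
Qed.

End Graph.

Theorem proposition2p3 (R : realType) (n : nat) (e : rel 'I_n) :
  simple_graph e -> connected_graph e ->
  [/\ (complete_graph e <-> positive_semigroup (heat_bilap R e)),
      (positive_semigroup (heat_bilap R e) <-> linfty_contractive (heat_bilap R e)) &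
      (complete_graph e <-> linfty_contractive (heat_bilap R e))].
Proof.
move=> sg con.
have c2p : complete_graph e ->
    positive_semigroup (heat_bilap R e) /\ linfty_contractive (heat_bilap R e).
  move=> comp.
  have PC t : (forall i j, 0 <= heat_bilap R e t i j) -> _ := fun h => pos_contr h (heat_rowsum e t).
  have nn t : 0 <= t -> forall i j, 0 <= heat_bilap R e t i j.
    move=> t0 i j; rewrite (heat_complete sg comp).
    have E1 : expR (- t * (n%:R : R) ^+ 2) <= 1.
      by rewrite expR_le1 mulNr oppr_le0 mulr_ge0 // exprn_ge0.
    rewrite addr_ge0 // ?mulr_ge0 ?expR_ge0 ?invr_ge0 ?ler0n ?subr_ge0 //.
  by split => t t0; have [H1 H2] := PC t (nn t t0).
have p2c : positive_semigroup (heat_bilap R e) -> complete_graph e.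
  move=> pos; case: (pselect (complete_graph e)) => // nc.
  have [t [t0 [a [c neg]]]] := heat_neg R sg con nc.
  have hf : forall j, 0 <= (\col_j (j == c)%:R : 'cV[R]_n) j 0 by move=> j; rewrite mxE ler0n.
  have := pos t t0 _ hf a.
  rewrite mxE (bigD1 c) //= big1 => [|j jc]; last by rewrite mxE (negbTE jc) mulr0.
  rewrite mxE eqxx mulr1 addr0 => H0.
  by have := lt_le_trans neg H0; rewrite ltxx.
have l2c : linfty_contractive (heat_bilap R e) -> complete_graph e.
  move=> contr; case: (pselect (complete_graph e)) => // nc.
  have [t [t0 [a [c neg]]]] := heat_neg R sg con nc.
  set g : 'cV[R]_n := \col_j (1 - 2 * (j == c)%:R).
  have := contr t t0 (map_mx (real_complex R) g).
  rewrite -map_mxM.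
  have Hg : (heat_bilap R e t *m g) a 0 = 1 - 2 * heat_bilap R e t a c.
    have gE j : g j 0 = 1 - 2 * (j == c)%:R by rewrite mxE.
    rewrite mxE; under eq_bigr do rewrite gE mulrBr mulr1.
    rewrite sumrB heat_rowsum; congr (_ - _).
    rewrite (bigD1 c) //= big1 => [|j jc]; last by rewrite (negbTE jc) mulr0 mulr0.
    by rewrite eqxx mulr1 addr0 mulrC.
  have S1 : supnorm (map_mx (real_complex R) g) <= 1.
    apply: supnorm_le => // j; rewrite !mxE normc_real.
    by case: (j == c); rewrite ?mulr1 ?mulr0 ?subr0 ?normr1 //; rewrite (_ : 1 - 2 = -1 :> R) ?normrN ?normr1 //; lra.
  have S2 : 1 - 2 * heat_bilap R e t a c <= supnorm (map_mx (real_complex R) (heat_bilap R e t *m g)).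
    apply: le_trans (normc_le_sup _ a); rewrite [X in Normc.normc X]mxE Hg normc_real.
    exact: ler_norm.
  move=> H; have := le_trans S2 (le_trans H S1); lra.
split; split.
- by move=> /c2p [].
- exact: p2c.
- by move=> /p2c /c2p [].
- by move=> /l2c /c2p [].
- by move=> /c2p [].
- exact: l2c.
Qed.
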